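(* Let $\mathcal A$ be a super weakly amenable Banach algebra. Then (i) the linear span of $\{ab:a,b\in\mathcal A\}$ is dense in $\mathcal A$; and (ii) there are no nonzero continuous point derivations on $\mathcal A$: for every nonzero continuous multiplicative linear functional $\varphi:\mathcal A\to\mathbb C$, every continuous linear functional $d:\mathcal A\to\mathbb C$ with $d(ab)=d(a)\varphi(b)+\varphi(a)d(b)$ for all $a,b\in\mathcal A$ is zero.
   Context: For a continuous homomorphism $\varphi:\mathcal A\to\mathcal B$ of Banach algebras, $\mathcal B_\varphi$ is $\mathcal B$ as an $\mathcal A$-bimodule with $a\cdot b=\varphi(a)b$, $b\cdot a=b\varphi(a)$, and its dual $\mathcal B_\varphi^*$ is an $\mathcal A$-bimodule via $\langle x,a\cdot f\rangle=\langle x\cdot a,f\rangle$, $\langle x,f\cdot a\rangle=\langle a\cdot x,f\rangle$. A derivation $d:\mathcal A\to X$ is a bounded linear map with $d(ab)=d(a)\cdot b+a\cdot d(b)$. $\mathcal A$ is called super weakly amenable if for every Banach algebra $\mathcal B$, every continuous homomorphism $\varphi:\mathcal A\to\mathcal B$ and every derivation $d:\mathcal A\to\mathcal B_\varphi^*$, one has $\langle d(a),\varphi(b)\rangle+\langle d(b),\varphi(a)\rangle=0$ for all $a,b\in\mathcal A$. *)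

(* Defs.v *)
From mathcomp Require Import all_boot all_order all_algebra complex.
From mathcomp Require Import all_classical all_reals all_analysis.
Import GRing.Theory Num.Theory numFieldNormedType.Exports.

Set Implicit Arguments.
Unset Strict Implicit.
Unset Printing Implicit Defensive.

Local Open Scope ring_scope.
Local Open Scope classical_set_scope.

Record banachAlgebra (R : realType) := BanachAlgebra {
  ba_sort :> completeNormedModType R[i];
  ba_mul : ba_sort -> ba_sort -> ba_sort;
  ba_mulA : forall a b c, ba_mul a (ba_mul b c) = ba_mul (ba_mul a b) c;
  ba_mulDl : forall a b c, ba_mul (a + b) c = ba_mul a c + ba_mul b c;
  ba_mulDr : forall a b c, ba_mul a (b + c) = ba_mul a b + ba_mul a c;
  ba_mulZl : forall (k : R[i]) a b, ba_mul (k *: a) b = k *: ba_mul a b;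
  ba_mulZr : forall (k : R[i]) a b, ba_mul a (k *: b) = k *: ba_mul a b;
  ba_norm_mul : forall a b, `|ba_mul a b| <= `|a| * `|b|
}.

Arguments ba_mul {R} A a b : rename.

Definition cont_hom (R : realType) (A B : banachAlgebra R) (phi : A -> B) :=
  [/\ forall (k : R[i]) (a a' : A), phi (k *: a + a') = k *: phi a + phi a',
      forall a a' : A, phi (ba_mul A a a') = ba_mul B (phi a) (phi a')
    & continuous phi].

Definition cont_lin_functional (R : realType) (V : normedModType R[i])
    (f : V -> (R[i])^o) :=
  (forall (k : R[i]) (x y : V), f (k *: x + y) = k * f x + f y) /\
  continuous f.

(* A derivation d : A -> (B_phi)^dual, where d a is the functional d a : B -> C.
   - each d a lies in B^dual,
   - d is linear and bounded as a map A -> B^* (operator norm on B^dual),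
   - Leibniz rule for the dual module actions:
       <x, d(ab)> = <x, d(a).b> + <x, a.d(b)>
                  = <b.x, d(a)> + <x.a, d(b)>
                  = <phi(b) x, d(a)> + <x phi(a), d(b)>. *)
Definition dual_derivation (R : realType) (A B : banachAlgebra R)
    (phi : A -> B) (d : A -> B -> (R[i])^o) :=
  [/\ forall a : A, cont_lin_functional (d a),
      forall (k : R[i]) (a a' : A) (x : B), d (k *: a + a') x = k * d a x + d a' x,
      exists M : R[i], forall (a : A) (x : B), `|d a x| <= M * `|a| * `|x|
    & forall (a b : A) (x : B),
        d (ba_mul A a b) x = d a (ba_mul B (phi b) x) + d b (ba_mul B x (phi a))].

Definition super_weakly_amenable (R : realType) (A : banachAlgebra R) : Prop :=
  forall (B : banachAlgebra R) (phi : A -> B) (d : A -> B -> (R[i])^o),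
    cont_hom phi -> dual_derivation phi d ->
    forall a b : A, d a (phi b) + d b (phi a) = 0.

Definition lin_span (R : realType) (V : lmodType R[i]) (S : set V) : set V :=
  [set x | exists (n : nat) (c : 'I_n -> R[i]) (v : 'I_n -> V),
      (forall i, S (v i)) /\ x = \sum_(i < n) c i *: v i].

Definition ba_products (R : realType) (A : banachAlgebra R) : set A :=
  [set x | exists a b : A, x = ba_mul A a b].

Definition character (R : realType) (A : banachAlgebra R) (phi : A -> (R[i])^o) :=
  [/\ cont_lin_functional phi,
      forall a b : A, phi (ba_mul A a b) = phi a * phi b
    & exists a : A, phi a != 0].

Arguments ba_products {R} A _.

(* Main.v *)
Require Import Defs.
From mathcomp Require Import all_boot all_order all_algebra complex.
From mathcomp Require Import all_classical all_reals all_analysis.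
From mathcomp Require Import ring lra.
Import Order.TTheory GRing.Theory Num.Theory numFieldNormedType.Exports.
Local Open Scope ring_scope.
Local Open Scope classical_set_scope.
Set Implicit Arguments.
Unset Strict Implicit.
Unset Printing Implicit Defensive.


Section Basics.
Variables (R : realType) (V : normedModType R[i]).

Definition rs (r : R) (x : V) : V := (r%:C)%C *: x.
Definition nrm (x : V) : R := complex.Re `|x|.

Lemma rCD (a b : R) : ((a + b)%:C = a%:C + b%:C :> R[i])%C.
Proof. by apply/eqP; rewrite eq_complex /= addr0 !eqxx. Qed.
Lemma rCM (a b : R) : ((a * b)%:C = a%:C * b%:C :> R[i])%C.
Proof. by apply/eqP; rewrite eq_complex /= !mulr0 !mul0r subr0 addr0 !eqxx. Qed.
Lemma rC1 : ((1 : R)%:C = 1 :> R[i])%C. Proof. by []. Qed.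
Lemma rC0 : ((0 : R)%:C = 0 :> R[i])%C. Proof. by []. Qed.
Lemma rCN (a : R) : ((- a)%:C = - a%:C :> R[i])%C.
Proof. by apply/eqP; rewrite eq_complex /= oppr0 !eqxx. Qed.

Lemma rsA a b x : rs a (rs b x) = rs (a * b) x.
Proof. by rewrite /rs scalerA rCM. Qed.
Lemma rsDl a b x : rs (a + b) x = rs a x + rs b x.
Proof. by rewrite /rs rCD scalerDl. Qed.
Lemma rsDr a x y : rs a (x + y) = rs a x + rs a y.
Proof. by rewrite /rs scalerDr. Qed.
Lemma rs1 x : rs 1 x = x. Proof. by rewrite /rs rC1 scale1r. Qed.
Lemma rs0 x : rs 0 x = 0. Proof. by rewrite /rs rC0 scale0r. Qed.
Lemma rsx0 a : rs a 0 = 0. Proof. by rewrite /rs scaler0. Qed.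
Lemma rsN1 x : rs (-1) x = - x. Proof. by rewrite /rs rCN rC1 scaleN1r. Qed.

Lemma rsN a x : rs (- a) x = - rs a x.
Proof. by rewrite /rs rCN scaleNr. Qed.
Lemma rsNx a x : rs a (- x) = - rs a x.
Proof. by rewrite /rs scalerN. Qed.

Lemma normE x : `|x| = ((nrm x)%:C)%C.
Proof. by rewrite /nrm RRe_real // ger0_real. Qed.

Lemma nrm_ge0 x : 0 <= nrm x.
Proof. by rewrite -ler0c -normE. Qed.

Lemma nrmD x y : nrm (x + y) <= nrm x + nrm y.
Proof. by rewrite -lecR rCD -!normE ler_normD. Qed.

Lemma nrmN x : nrm (- x) = nrm x.
Proof. by rewrite /nrm normrN. Qed.

Lemma nrm_rs a x : nrm (rs a x) = `|a| * nrm x.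
Proof.
apply: complexI; rewrite rCM -!normE /rs normrZ; congr (_ * _).
rewrite normc_def /= expr0n /= addr0 sqrtr_sqr //.
Qed.

Lemma nrmB x y : nrm (x - y) = nrm (y - x).
Proof. by rewrite -nrmN opprB. Qed.

End Basics.


Section HBext.
Variables (R : realType) (V : normedModType R[i]) (C : R).
Hypothesis C0 : 0 < C.

Definition subsp (D : set V) :=
  [/\ D 0, forall x y, D x -> D y -> D (x + y) & forall r x, D x -> D (rs r x)].
Definition linon (D : set V) (g : V -> R) :=
  (forall x y, D x -> D y -> g (x + y) = g x + g y) /\
  (forall r x, D x -> g (rs r x) = r * g x).
Definition bndon (D : set V) (g : V -> R) := forall x, D x -> g x <= C * nrm x.

Definition Dext (D : set V) (y : V) :=
  [set x | exists u t, D u /\ x = u + rs t y].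

Lemma subspN D x : subsp D -> D x -> D (- x).
Proof. by case=> _ _ hs hx; rewrite -rsN1; apply: hs. Qed.

Lemma lin0 D g : subsp D -> linon D g -> g 0 = 0.
Proof.
case=> D0 _ _ [_ hs]; have := hs 0 0 D0; rewrite rs0 mul0r //.
Qed.

Lemma ext_uniq D y u t u' t' : subsp D -> ~ D y -> D u -> D u' ->
  u + rs t y = u' + rs t' y -> t = t' /\ u = u'.
Proof.
move=> hD Dy Du Du' E.
have ht : t = t'.
  apply/eqP; apply/negPn/negP => ntt; apply: Dy.
  have : rs (t - t') y = u' - u.
    have -> : u' = u + rs t y - rs t' y by rewrite E addrK.
    by rewrite rsDl rsN [RHS]addrC !addrA addNr add0r.
  move=> E2; have -> : y = rs ((t - t')^-1) (u' - u).
    by rewrite -E2 rsA mulVf ?rs1 // subr_eq0.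
  have [_ hadd hs] := hD; apply: hs; apply: hadd => //; exact: subspN.
by split=> //; move: E; rewrite ht => /addIr.
Qed.

Lemma ext_lemma D g y c : subsp D -> linon D g -> bndon D g -> ~ D y ->
  (forall u, D u -> g u - C * nrm (u - y) <= c) ->
  (forall v, D v -> c <= C * nrm (v + y) - g v) ->
  exists g', [/\ subsp (Dext D y), linon (Dext D y) g', bndon (Dext D y) g',
     forall x, D x -> g' x = g x & g' y = c].
Proof.
move=> hD [gD gs] gb Dy cl cu.
have [D0 Dadd Ds] := hD.
pose g' (x : V) := match pselect (exists ut : V * R, D ut.1 /\ x = ut.1 + rs ut.2 y) with
  | left h => let ut := proj1_sig (cid h) in g ut.1 + ut.2 * c
  | right _ => 0 end.
have key u t : D u -> g' (u + rs t y) = g u + t * c.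
  move=> Du; rewrite /g'; case: pselect => [h|[]]; last by exists (u, t).
  case: (cid h) => [[u1 t1]] /= [Du1 E].
  by have [-> ->] := ext_uniq hD Dy Du Du1 E.
have hD' : subsp (Dext D y).
  split.
  - by exists 0, 0; rewrite rs0 addr0.
  - move=> _ _ [u [t [Du ->]]] [u' [t' [Du' ->]]]; exists (u + u'), (t + t').
    split; first exact: Dadd.
    by rewrite rsDl addrACA.
  - move=> r _ [u [t [Du ->]]]; exists (rs r u), (r * t); split; first exact: Ds.
    by rewrite rsDr rsA.
exists g'; split => //.
- split.
  + move=> _ _ [u [t [Du ->]]] [u' [t' [Du' ->]]].
    rewrite addrACA -rsDl !key //; last exact: Dadd.
    by rewrite gD // mulrDl addrACA.
  + move=> r _ [u [t [Du ->]]].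
    by rewrite rsDr rsA !key //; [rewrite gs // mulrDr mulrA | exact: Ds].
- move=> _ [u [t [Du ->]]]; rewrite key //.
  have [t0|tn0] := eqVneq t 0.
    by rewrite t0 mul0r addr0 rs0 addr0; apply: gb.
  have [tlt|tgt|teq] := ltgtP t 0; last by move: tn0; rewrite teq eqxx.
  +
    pose s := - t; have s0 : 0 < s by rewrite oppr_gt0.
    pose w := rs (s^-1) u; have Dw : D w by apply: Ds.
    have h1 := cl w Dw.
    have h2 : s * (g w - C * nrm (w - y)) <= s * c by rewrite ler_pM2l.
    have e1 : s * g w = g u by rewrite /w gs // mulrA mulfV ?mul1r // gt_eqF.
    have e2 : s * nrm (w - y) = nrm (u + rs t y).
      rewrite -[s]ger0_norm ?ltW // -nrm_rs rsDr rsA mulfV ?rs1 ?gt_eqF //.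
      by rewrite rsNx /s rsN opprK.
    move: h2; rewrite mulrBr e1 mulrCA e2 /s mulNr; lra.
  +
    pose w := rs (t^-1) u; have Dw : D w by apply: Ds.
    have h1 := cu w Dw.
    have h2 : t * c <= t * (C * nrm (w + y) - g w) by rewrite ler_pM2l.
    have e1 : t * g w = g u by rewrite /w gs // mulrA mulfV ?mul1r // gt_eqF.
    have e2 : t * nrm (w + y) = nrm (u + rs t y).
      rewrite -{1}[t]ger0_norm ?ltW // -nrm_rs rsDr rsA mulfV ?rs1 ?gt_eqF //.
    move: h2; rewrite mulrBr e1 mulrCA e2; lra.
- by move=> x Dx; have := key x 0 Dx; rewrite rs0 addr0 mul0r addr0.
- by have := key 0 1 D0; rewrite rs1 add0r mul1r (lin0 hD (conj gD gs)) add0r.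
Qed.

Lemma ext_c D g y : subsp D -> linon D g -> bndon D g ->
  exists c, (forall u, D u -> g u - C * nrm (u - y) <= c) /\
            (forall v, D v -> c <= C * nrm (v + y) - g v).
Proof.
move=> hD [gD gs] gb; have [D0 Dadd Ds] := hD.
have key u v : D u -> D v -> g u - C * nrm (u - y) <= C * nrm (v + y) - g v.
  move=> Du Dv; have := gb (u + v) (Dadd _ _ Du Dv); rewrite gD // => h1.
  have := nrmD (u - y) (v + y); rewrite addrACA addNr addr0 => h2.
  have h3 : C * nrm (u + v) <= C * (nrm (u - y) + nrm (v + y)) by rewrite ler_pM2l.
  move: h3; rewrite mulrDr; lra.
pose E := [set a | exists2 u, D u & a = g u - C * nrm (u - y)].
exists (sup E); split.
- move=> u Du; apply: ub_le_sup; last by exists u.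
  by exists (C * nrm (0 + y) - g 0) => _ [w Dw ->]; apply: key.
- move=> v Dv; apply: ge_sup; first by exists (g 0 - C * nrm (0 - y)), 0.
  by move=> _ [w Dw ->]; apply: key.
Qed.


Lemma hb_real (D0 : set V) (g0 : V -> R) : subsp D0 -> linon D0 g0 -> bndon D0 g0 ->
  exists g, linon setT g /\ bndon setT g /\ (forall x, D0 x -> g x = g0 x).
Proof.
move=> hD0 hl0 hb0.
pose P (p : set V * (V -> R)) := [/\ subsp p.1, linon p.1 p.2, bndon p.1 p.2,
   D0 `<=` p.1 & forall x, D0 x -> p.2 x = g0 x].
pose T := {p | P p}.
pose Rl (s t : T) : bool := `[< (sval s).1 `<=` (sval t).1 /\
   forall x, (sval s).1 x -> (sval s).2 x = (sval t).2 x >].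
have P0 : P (D0, g0) by split.
pose t0 : T := exist _ (D0, g0) P0.
have Rrefl : forall t, Rl t t by move=> t; apply/asboolP; split.
have Rtrans : forall r s t, Rl r s -> Rl s t -> Rl r t.
  move=> r s t /asboolP [h1 h2] /asboolP [h3 h4]; apply/asboolP; split.
    by move=> x /h1 /h3.
  by move=> x hx; rewrite h2 // h4 //; apply: h1.
have Rchain : forall A : set T, total_on A (fun x y => Rl x y) ->
    exists t, forall s, A s -> Rl s t.
  move=> A Atot.
  case: (pselect (exists s, A s)) => [[s0 As0]|nA]; last first.
    by exists t0 => s As; exfalso; apply: nA; exists s.
  pose Du := [set x | exists s, A s /\ (sval s).1 x].
  pose gu x := match pselect (exists s, A s /\ (sval s).1 x) with
    | left h => (sval (proj1_sig (cid h))).2 x | right _ => 0 end.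
  have compat s1 s2 x : A s1 -> A s2 -> (sval s1).1 x -> (sval s2).1 x ->
      (sval s1).2 x = (sval s2).2 x.
    move=> A1 A2 x1 x2; case: (Atot _ _ A1 A2) => /asboolP [_ h]; first exact: h.
    by rewrite h.
  have key s x : A s -> (sval s).1 x -> gu x = (sval s).2 x.
    move=> As sx; rewrite /gu; case: pselect => [h|[]]; last by exists s.
    by case: (cid h) => s' [As' s'x] /=; apply: compat.
  have common s1 s2 : A s1 -> A s2 -> exists s, [/\ A s, (sval s1).1 `<=` (sval s).1
      & (sval s2).1 `<=` (sval s).1].
    move=> A1 A2; case: (Atot _ _ A1 A2) => /asboolP [h _].
      by exists s2; split.
    by exists s1; split.
  have Pu : P (Du, gu).
    split => /=.
    - split.
      + by exists s0; split => //; have [[h0 _ _] _ _ _ _] := svalP s0.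
      + move=> x y [s1 [A1 x1]] [s2 [A2 x2]].
        have [s [As h1 h2]] := common _ _ A1 A2.
        exists s; split => //; have [[_ hadd _] _ _ _ _] := svalP s.
        by apply: hadd; [apply: h1 | apply: h2].
      + move=> r x [s1 [A1 x1]]; exists s1; split => //.
        by have [[_ _ hs] _ _ _ _] := svalP s1; apply: hs.
    - split.
      + move=> x y [s1 [A1 x1]] [s2 [A2 x2]].
        have [s [As h1 h2]] := common _ _ A1 A2.
        have [[_ hadd _] [ladd _] _ _ _] := svalP s.
        rewrite (key s) //; last by apply: hadd; [apply: h1 | apply: h2].
        by rewrite (key s x) ?(key s y) //; [apply: ladd; [apply: h1|apply: h2]|apply: h2|apply: h1].
      + move=> r x [s1 [A1 x1]].
        have [[_ _ hs] [_ ls] _ _ _] := svalP s1.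
        by rewrite (key s1) ?(key s1 x) //; [apply: ls | apply: hs].
    - move=> x [s1 [A1 x1]]; rewrite (key s1) //.
      by have [_ _ hb _ _] := svalP s1; apply: hb.
    - by move=> x D0x; exists s0; split => //; have [_ _ _ hsub _] := svalP s0; apply: hsub.
    - move=> x D0x; have [_ _ _ hsub heq] := svalP s0.
      by rewrite (key s0) //; [apply: heq | apply: hsub].
  exists (exist _ (Du, gu) Pu) => s As; apply/asboolP; split => /=.
    by move=> x sx; exists s.
  by move=> x sx; rewrite (key s).
have [t tmax] := ZL_preorder t0 Rrefl Rtrans Rchain.
case: t tmax => [[D g] [hs hl hb hsub heq]] tmax /=.
have DT : forall y, D y.
  move=> y; apply/not_notP => Dy.
  have [c [cl cu]] := ext_c y hs hl hb.
  have [g' [hs' hl' hb' hext hy]] := ext_lemma hs hl hb Dy cl cu.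
  have DD' : D `<=` Dext D y.
    by move=> x Dx; exists x, 0; rewrite rs0 addr0.
  have P' : P (Dext D y, g').
    split => //.
    - by move=> x hx; apply: DD'; exact: (hsub _ hx).
    - by move=> x D0x /=; rewrite hext ?heq //; exact: (hsub _ D0x).
  have := tmax (exist _ (Dext D y, g') P'); rewrite /premaximal.
  move=> /(_ _) h.
  have /asboolP [h1 _] : Rl (exist _ (Dext D y, g') P')
     (exist _ (D, g) (And5 hs hl hb hsub heq)).
    apply: h; apply/asboolP; split => //= x Dx; by rewrite hext.
  apply: Dy; apply: h1 => /=; exists 0, 1; split; first by have [] := hs.
  by rewrite rs1 add0r.
exists g; split; last split => //.
- by have [h1 h2] := hl; split => *; [apply: h1 | apply: h2]; apply: DT.
- by move=> x _; exact: (hb x).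
Qed.

End HBext.


Section Clf.
Variables (R : realType) (V : normedModType R[i]).

Lemma lin_sub (f : V -> (R[i])^o) :
  (forall (k : R[i]) x y, f (k *: x + y) = k * f x + f y) ->
  forall x t, f x - f t = f (x - t).
Proof.
move=> hl x t; have := hl 1 (x - t) t; rewrite scale1r mul1r subrK => ->.
by rewrite addrK.
Qed.

Lemma lin_0 (f : V -> (R[i])^o) :
  (forall (k : R[i]) x y, f (k *: x + y) = k * f x + f y) -> f 0 = 0.
Proof.
move=> hl; have := lin_sub hl 0 0; rewrite subrr subr0 => <- //.
Qed.

Lemma clf_of (f : V -> (R[i])^o) (K : R[i]) : 0 <= K ->
  (forall (k : R[i]) x y, f (k *: x + y) = k * f x + f y) ->
  (forall x, `|f x| <= K * `|x|) -> cont_lin_functional f.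
Proof.
move=> K0 hl hb; split => // x; apply/cvgrPdist_lt => eps eps0.
apply/nbhs_normP; exists (eps / (K + 1)) => /=.
  by rewrite divr_gt0 // ltr_wpDl.
move=> t; rewrite /ball_ /= => ht.
rewrite (lin_sub hl); apply: (le_lt_trans (hb _)).
have K1 : 0 < K + 1 by rewrite ltr_wpDl.
apply: (le_lt_trans (y := (K + 1) * `|x - t|)).
  by rewrite ler_wpM2r // lerDl.
by rewrite -ltr_pdivlMl // mulrC.
Qed.

Lemma bound_of_clf (f : V -> (R[i])^o) : cont_lin_functional f ->
  exists K : R[i], 0 <= K /\ forall x, `|f x| <= K * `|x|.
Proof.
move=> [hl hc]; have f0 := lin_0 hl.
have := hc 0; move/cvgrPdist_lt => /(_ 1 ltr01) /nbhs_normP [e /= e0 he].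
exists (2 / e); split; first by rewrite ltW // divr_gt0.
move=> x; have [->|xn0] := eqVneq x 0; first by rewrite f0 !normr0 mulr0.
have nx : 0 < `|x| by rewrite normr_gt0.
pose l := e / (2 * `|x|).
have l0 : 0 < l by rewrite divr_gt0 // mulr_gt0.
have := he (l *: x); rewrite /ball_ /= sub0r normrN normrZ gtr0_norm //.
have -> : l * `|x| = e / 2.
  rewrite /l; by field; rewrite gt_eqF.
move=> /(_ _) h.
have : `|f (l *: x)| < 1.
  rewrite -normrN -sub0r -f0; apply: h.
  by rewrite ltr_pdivrMr // ltr_pMr // ltr1n.
have -> : f (l *: x) = l * f x by rewrite -[l *: x]addr0 hl f0 addr0.
rewrite normrM gtr0_norm // => hl1.
have : `|f x| < l^-1 by rewrite -(ltr_pM2l l0) mulfV ?gt_eqF.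
move=> /ltW /le_trans; apply.
by rewrite /l invf_div mulrAC.
Qed.

End Clf.


Section Sep.
Variables (R : realType) (V : normedModType R[i]).

Lemma norm_rC (a : R) : `|(a%:C)%C| = (`|a|%:C)%C :> R[i].
Proof. by rewrite normc_def /= expr0n /= addr0 sqrtr_sqr. Qed.

Lemma norm_i : `|'i%C| = 1 :> R[i].
Proof. by rewrite normc_def /= expr0n expr1n /= add0r sqrtr1. Qed.

Lemma ii : ('i * 'i = -1 :> R[i])%C.
Proof. by apply/eqP; rewrite eq_complex /= !mul0r !mul1r sub0r addr0 oppr0 !eqxx. Qed.

Lemma complexE' (k : R[i]) : k = ((complex.Re k)%:C + 'i * (complex.Im k)%:C)%C.
Proof. by case: k => a b; apply/eqP; rewrite eq_complex /= !mulr0 !mul0r !mul1r !subr0 !addr0 !add0r !eqxx. Qed.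

Lemma separate (S : set V) (x0 : V) (r : R) : 0 < r -> S 0 ->
  (forall x y, S x -> S y -> S (x + y)) -> (forall (k : R[i]) x, S x -> S (k *: x)) ->
  (forall z, S z -> r <= nrm (x0 - z)) ->
  exists F : V -> (R[i])^o, [/\ cont_lin_functional F, forall z, S z -> F z = 0 & F x0 != 0].
Proof.
move=> r0 S0 Sadd Sk Sfar.
pose C := r^-1; have C0 : 0 < C by rewrite invr_gt0.
have hS : subsp S by split => // a x Sx; apply: Sk.
have hl0 : linon S (fun _ => 0 : R) by split => *; rewrite ?mulr0 ?addr0.
have hb0 : bndon C S (fun _ => 0 : R) by move=> x _; apply: mulr_ge0; [exact: ltW | exact: nrm_ge0].
have nSx0 : ~ S x0 by move=> /Sfar; rewrite subrr /nrm normr0 /= leNgt r0.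
have cl : forall u, S u -> (fun _ => 0 : R) u - C * nrm (u - x0) <= 1.
  move=> u _ /=; have := nrm_ge0 (u - x0); have := ltW C0; nra.
have cu : forall v, S v -> 1 <= C * nrm (v + x0) - (fun _ => 0 : R) v.
  move=> v Sv /=; have := Sfar _ (Sk (-1) _ Sv); rewrite scaleN1r opprK addrC => h.
  by rewrite subr0 -(mulVf (lt0r_neq0 r0)) ler_pM2l.
have [g' [hs' hl' hb' hext hy]] := ext_lemma hS hl0 hb0 nSx0 cl cu.
have [g [[gD gs] [gb gext]]] := hb_real C0 hs' hl' hb'.
have gS z : S z -> g z = 0.
  by move=> Sz; rewrite gext ?hext //; exists z, 0; rewrite rs0 addr0.
have gx0 : g x0 = 1.
  by rewrite gext ?hy //; exists 0, 1; rewrite rs1 add0r; split; case: hS.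
have gN x : g (- x) = - g x by rewrite -rsN1 gs // mulN1r.
have gabs x : `|g x| <= C * nrm x.
  rewrite ler_norml gb // andbT lerNl -gN -(nrmN x) gb //.
have nrmi x : nrm ('i%C *: x) = nrm x.
  by rewrite /nrm normrZ normc_def /= expr0n expr1n /= add0r sqrtr1 mul1r.
pose F (x : V) : R[i] := ((g x)%:C - 'i * (g ('i *: x))%:C)%C.
have FD x y : F (x + y) = F x + F y.
  by rewrite /F scalerDr !gD // !rCD; ring.
have Frs a x : F (rs a x) = (a%:C)%C * F x.
  have comm : 'i%C *: rs a x = rs a ('i%C *: x) by rewrite /rs !scalerA mulrC.
  by rewrite /F comm !gs // !rCM; ring.
have Fi x : F ('i%C *: x) = 'i%C * F x.
  by rewrite /F scalerA ii scaleN1r gN rCN mulrN opprK mulrBr mulrA ii mulN1r opprK addrC.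
have FZ (k : R[i]) x : F (k *: x) = k * F x.
  rewrite {1}(complexE' k) scalerDl -scalerA FD -!/(rs _ _) Fi !Frs.
  by rewrite [in RHS](complexE' k) mulrDl mulrA.
have Flin (k : R[i]) x y : F (k *: x + y) = k * F x + F y by rewrite FD FZ.
have nI (b : R) : `|('i * b%:C)%C| = (`|b|%:C)%C :> R[i].
  by rewrite normrM normc_def /= expr0n expr1n /= add0r sqrtr1 mul1r norm_rC.
have Fb x : `|F x| <= ((2 * C)%:C)%C * `|x|.
  apply: (le_trans (ler_normB _ _)); rewrite nI norm_rC -rCD normE -rCM lecR.
  have := gabs x; have := gabs ('i%C *: x); rewrite nrmi; lra.
exists F; split.
- apply: (clf_of (K := ((2 * C)%:C)%C)) => //.
  by rewrite ler0c mulr_ge0 // ltW.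
- move=> z Sz; rewrite /F gS // gS; last exact: Sk.
  by rewrite mulr0 subr0.
- apply/eqP => h; have := congr1 (@complex.Re R) h; rewrite /F /= gx0.
  by rewrite !mul0r !mul1r subr0 oppr0 addr0 => /eqP; rewrite oner_eq0.
Qed.
End Sep.


Section Span.
Variables (R : realType) (V : lmodType R[i]) (P : set V).

Lemma span0 : lin_span P 0.
Proof. by exists 0%N, (fun _ => 0), (fun _ => 0); split => [[]//|]; rewrite big_ord0. Qed.

Lemma spanD x y : lin_span P x -> lin_span P y -> lin_span P (x + y).
Proof.
move=> [n [c [v [Pv ->]]]] [m [c2 [v2 [Pv2 ->]]]].
pose c' (i : 'I_(n + m)) := match fintype.split i with inl j => c j | inr j => c2 j end.
pose v' (i : 'I_(n + m)) := match fintype.split i with inl j => v j | inr j => v2 j end.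
have e1 j : fintype.split (lshift m j) = inl j := unsplitK (inl j).
have e2 j : fintype.split (rshift n j) = inr j := unsplitK (inr j).
exists (n + m)%N, c', v'; split.
  by move=> i; rewrite /v'; case: fintype.split.
rewrite big_split_ord /=; congr (_ + _); apply: eq_bigr => j _.
  by rewrite /c' /v' e1.
by rewrite /c' /v' e2.
Qed.

Lemma spanZ (k : R[i]) x : lin_span P x -> lin_span P (k *: x).
Proof.
move=> [n [c [v [Pv ->]]]]; exists n, (fun i => k * c i), v; split => //.
by rewrite scaler_sumr; apply: eq_bigr => i _; rewrite scalerA.
Qed.

Lemma spanP x : P x -> lin_span P x.
Proof.
by move=> Px; exists 1%N, (fun _ => 1), (fun _ => x); split => //; rewrite big_ord1 scale1r.
Qed.
End Span.



Section Main.
Variables (R : realType) (A : banachAlgebra R).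

Lemma der_prod (f h : A -> (R[i])^o) :
  cont_lin_functional f -> cont_lin_functional h ->
  (forall a b x, f (ba_mul A a b) * h x =
     f a * h (ba_mul A b x) + f b * h (ba_mul A x a)) ->
  dual_derivation (B := A) (fun a : A => a) (fun a x => f a * h x).
Proof.
move=> fc hc L.
have [Kf [Kf0 Kfb]] := bound_of_clf fc.
have [Kh [Kh0 Khb]] := bound_of_clf hc.
split.
- move=> a; apply: (clf_of (K := `|f a| * Kh)).
  + by rewrite mulr_ge0.
  + by move=> k x y; rewrite hc.1 mulrDr mulrCA.
  + by move=> x; rewrite normrM -mulrA ler_wpM2l.
- by move=> k a a' x; rewrite fc.1 mulrDl mulrA.
- exists (Kf * Kh) => a x; rewrite normrM.
  apply: (le_trans (ler_pM (normr_ge0 _) (normr_ge0 _) (Kfb a) (Khb x))).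
  by rewrite mulrACA mulrA.
- exact: L.
Qed.
End Main.


Section Main2.
Variables (R : realType) (A : banachAlgebra R).
Lemma part1 : super_weakly_amenable A ->
  closure (lin_span (ba_products A)) = [set: ba_sort A].
Proof.
move=> swa; apply/seteqP; split => // x0 _ B nB.
apply: contrapT => hne.
move/nbhs_normP: nB => [e /= e0 he].
have ereal : e = ((complex.Re e)%:C)%C by rewrite RRe_real // ger0_real // ltW.
have r0 : 0 < complex.Re e by rewrite -ltcR -ereal.
pose S := lin_span (ba_products A).
have far z : S z -> complex.Re e <= nrm (x0 - z).
  move=> Sz; rewrite leNgt; apply/negP => hlt; apply: hne; exists z; split => //.
  by apply: he; rewrite /ball_ /= normE ereal ltcR.
have [F [Fc FS Fx0]] := separate r0 (span0 _) (@spanD _ _ _) (@spanZ _ _ _) far.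
have Fp a b : F (ba_mul A a b) = 0 by apply: FS; apply: spanP; exists a, b.
have := swa A (fun a => a) (fun a x => F a * F x).
have hom : cont_hom (fun a : A => a) by split => // x; exact: cvg_id.
move=> /(_ hom (der_prod Fc Fc _)) H.
have /H {H}: forall a b x : A, F (ba_mul A a b) * F x =
     F a * F (ba_mul A b x) + F b * F (ba_mul A x a).
  by move=> a b x; rewrite !Fp !mulr0 mul0r addr0.
move=> /(_ x0 x0) /eqP; rewrite -mulr2n mulrn_eq0 /= mulf_eq0 orbb.
by rewrite (negbTE Fx0).
Qed.

Lemma part2 : super_weakly_amenable A ->
  (forall phi : A -> (R[i])^o, character phi ->
   forall d : A -> (R[i])^o, cont_lin_functional d ->
   (forall a b : A, d (ba_mul A a b) = d a * phi b + phi a * d b) ->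
   forall a : A, d a = 0).
Proof.
move=> swa phi [phic phim [a0 pa0]] d dc dL.
have hom : cont_hom (fun a : A => a) by split => // x; exact: cvg_id.
have L : forall a b x : A, d (ba_mul A a b) * phi x =
     d a * phi (ba_mul A b x) + d b * phi (ba_mul A x a).
  move=> a b x; rewrite dL !phim mulrDl !mulrA; congr (_ + _).
  by rewrite [phi a * _]mulrC -!mulrA [phi a * _]mulrC.
have H := swa A (fun a => a) (fun a x => d a * phi x) hom (der_prod dc phic L).
have da0 : d a0 = 0.
  have /eqP := H a0 a0; rewrite -mulr2n mulrn_eq0 /= mulf_eq0.
  by rewrite (negbTE pa0) orbF => /eqP.
move=> a; have /eqP := H a0 a; rewrite da0 mul0r add0r mulf_eq0.
by rewrite (negbTE pa0) orbF => /eqP.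
Qed.
End Main2.

Unset Implicit Arguments.
Theorem theorem3p2 (R : realType) (A : banachAlgebra R) :
  super_weakly_amenable A ->
  closure (lin_span (ba_products A)) = [set: ba_sort A] /\
  (forall phi : A -> (R[i])^o, character phi ->
   forall d : A -> (R[i])^o, cont_lin_functional d ->
   (forall a b : A, d (ba_mul A a b) = d a * phi b + phi a * d b) ->
   forall a : A, d a = 0).
Proof. by move=> swa; split; [exact: part1 | exact: part2]. Qed.
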